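(* Let $d\ge 2$ and $x\in[-1,1]$, and let $\rho^{AC}$ be the state on $\mathcal{H}^A\otimes\mathcal{H}^C$ defined in the context. For $r=1,\dots,d$ define the vectors $|\mu^{(r)}_k\rangle\in\mathcal{H}^C$, $k=1,\dots,d$, by $|\mu^{(r)}_r\rangle=|\mu^{(+)}_{rr}\rangle$, $|\mu^{(r)}_k\rangle=\frac{1}{\sqrt2}\big(|\mu^{(+)}_{kr}\rangle+|\mu^{(-)}_{kr}\rangle\big)$ for $k<r$, and $|\mu^{(r)}_k\rangle=\frac{1}{\sqrt2}\big(|\mu^{(+)}_{rk}\rangle-|\mu^{(-)}_{rk}\rangle\big)$ for $k>r$, and the maximally entangled states $$|\Psi^{\max}_r\rangle=\frac{1}{\sqrt d}\sum_{k=1}^d |k\rangle\otimes|\mu^{(r)}_k\rangle,\qquad r=1,\dots,d.$$ (The family $\{|\mu^{(r)}_k\rangle\}_{r,k}$ is an orthonormal basis of $\mathcal{H}^C$.) Then the set of maximally entangled states that attains the maximum in the definition of the fully entangled fraction of $\rho^{AC}$ is $\{|\Psi^{\max}_r\rangle\}_{r=1}^d$, i.e. $$\mathcal{F}(\rho^{AC})=\sum_{r=1}^d\langle\Psi^{\max}_r|\rho^{AC}|\Psi^{\max}_r\rangle .$$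
   Context: Let $\mathcal{H}^A=\mathbb{C}^d$ with orthonormal basis $\{|1\rangle,\dots,|d\rangle\}$ and let $\mathcal{H}^C=\mathbb{C}^{d^2}$ with orthonormal basis $\{|\mu^{(+)}_{kl}\rangle\}_{1\le k\le l\le d}\cup\{|\mu^{(-)}_{kl}\rangle\}_{1\le k<l\le d}$. For $x\in[-1,1]$ put $\lambda_\pm=\frac{1\pm x}{d(d\pm1)}$, and let $\alpha,\theta\in[0,\pi/2]$ be defined by $\cos\alpha=\sqrt{d\lambda_+}$ and $\cos\theta=\sqrt{\lambda_+/(\lambda_++\lambda_-)}$. For $r=1,\dots,d$ let $$|\Psi_r\rangle=\cos\alpha\,|r\rangle|\mu^{(+)}_{rr}\rangle+\frac{\sin\alpha}{\sqrt{d-1}}\sum_{k=1}^{r-1}|k\rangle\big(\cos\theta|\mu^{(+)}_{kr}\rangle+\sin\theta|\mu^{(-)}_{kr}\rangle\big)+\frac{\sin\alpha}{\sqrt{d-1}}\sum_{k=r+1}^{d}|k\rangle\big(\cos\theta|\mu^{(+)}_{rk}\rangle-\sin\theta|\mu^{(-)}_{rk}\rangle\big),$$ and $\rho^{AC}=\frac1d\sum_{r=1}^d|\Psi_r\rangle\langle\Psi_r|$. (This $\rho^{AC}$ is obtained by tracing out $B$ from a purification on $\mathcal{H}^A\otimes\mathcal{H}^B\otimes\mathcal{H}^C$ of the $d\otimes d$ Werner state $\rho_{\mathrm w}^{AB}=\frac{d-x}{d^3-d}\mathbb{I}+\frac{dx-1}{d^3-d}F$, $F$ the swap.) Fully entangled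 fraction: for a state $\rho$ on $\mathbb{C}^d\otimes\mathbb{C}^{d^2}$ (so $d^2=Kd$ with $K=d$), fix an orthonormal basis $\{|e_m\rangle\}_{m=1}^{d^2}$ of the second factor and set $|\psi^{\max}_i\rangle=\frac1{\sqrt d}\sum_{j=1}^d|j\rangle\otimes|e_{j+(i-1)d}\rangle$, $i=1,\dots,d$; then $\mathcal{F}(\rho)=\max_{V}\sum_{i=1}^{d}\langle\psi^{\max}_i|(\mathbb{I}\otimes V)\rho(\mathbb{I}\otimes V^\dagger)|\psi^{\max}_i\rangle$, the maximum over all unitaries $V$ on the second factor. *)

(* Defs.v *)
From HB Require Import structures.
From mathcomp Require Import all_boot all_order all_algebra.
From mathcomp Require Import sesquilinear spectral.
From mathcomp Require Import complex mxtens.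
Set Implicit Arguments. Unset Strict Implicit. Unset Printing Implicit Defensive.
Import Order.TTheory GRing.Theory Num.Theory.
Local Open Scope ring_scope.

Section Defs.
Variable R : rcfType.
Local Notation C := (R[i]).

Definition toC (a : R) : C := Complex a 0.

Definition adj m n (M : 'M[C]_(m, n)) : 'M[C]_(n, m) := (map_mx Num.conj M)^T.

Definition ket n (i : 'I_n) : 'cV[C]_n := delta_mx i 0.

Definition tensv m n (u : 'cV[C]_m) (v : 'cV[C]_n) : 'cV[C]_(m * n) := u *t v.

Variable d : nat.

(* H^C = C^(d^2); orthonormal basis: mu^(+)_{kl} (k <= l) is the basis vector
   with index (k,l), mu^(-)_{kl} (k < l) the basis vector with index (l,k). *)
Definition muP (k l : 'I_d) : 'cV[C]_(d * d) := ket (mxtens_index (k, l)).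
Definition muM (k l : 'I_d) : 'cV[C]_(d * d) := ket (mxtens_index (l, k)).

Definition dR : R := d%:R.
Definition lam_plus (x : R) : R := (1 + x) / (dR * (dR + 1)).
Definition lam_minus (x : R) : R := (1 - x) / (dR * (dR - 1)).
(* alpha, theta in [0, pi/2] with cos alpha = sqrt(d lam_+),
   cos theta = sqrt(lam_+/(lam_+ + lam_-)); hence sin = sqrt(1 - cos^2). *)
Definition cos_alpha (x : R) : R := Num.sqrt (dR * lam_plus x).
Definition sin_alpha (x : R) : R := Num.sqrt (1 - dR * lam_plus x).
Definition cos_theta (x : R) : R :=
  Num.sqrt (lam_plus x / (lam_plus x + lam_minus x)).
Definition sin_theta (x : R) : R :=
  Num.sqrt (1 - lam_plus x / (lam_plus x + lam_minus x)).

Definition Psi (x : R) (r : 'I_d) : 'cV[C]_(d * (d * d)) :=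
  toC (cos_alpha x) *: tensv (ket r) (muP r r)
  + toC (sin_alpha x / Num.sqrt (dR - 1)) *:
      \sum_(k < d | (k < r)%N)
        tensv (ket k) (toC (cos_theta x) *: muP k r + toC (sin_theta x) *: muM k r)
  + toC (sin_alpha x / Num.sqrt (dR - 1)) *:
      \sum_(k < d | (r < k)%N)
        tensv (ket k) (toC (cos_theta x) *: muP r k - toC (sin_theta x) *: muM r k).

Definition rhoAC (x : R) : 'M[C]_(d * (d * d)) :=
  (toC dR)^-1 *: \sum_(r < d) (Psi x r *m adj (Psi x r)).

(* Fully entangled fraction on C^d (x) C^(d^2) (K = d): reference maximally
   entangled states psi_i = d^{-1/2} sum_j |j> (x) |e_{j+(i-1)d}>, where
   {e_m} is the standard basis of C^(d^2), with e_{j+(i-1)d} (1-based) being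
   the basis vector of (0-based) index (i,j). *)
Definition psi_ref (i : 'I_d) : 'cV[C]_(d * (d * d)) :=
  (toC (Num.sqrt dR))^-1 *: \sum_(j < d) tensv (ket j) (ket (mxtens_index (i, j))).

Definition fef_value (rho : 'M[C]_(d * (d * d))) (V : 'M[C]_(d * d)) : C :=
  \sum_(i < d)
    (adj (psi_ref i) *m ((1%:M *t V) *m rho *m adj (1%:M *t V)) *m psi_ref i) 0 0.

Definition is_FEF (rho : 'M[C]_(d * (d * d))) (f : C) : Prop :=
  (exists V : 'M[C]_(d * d), V \is unitarymx /\ fef_value rho V = f) /\
  (forall V : 'M[C]_(d * d), V \is unitarymx -> fef_value rho V <= f).

Definition mu_r (r k : 'I_d) : 'cV[C]_(d * d) :=
  if k == r then muP r r
  else if (k < r)%N then (toC (Num.sqrt 2))^-1 *: (muP k r + muM k r)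
  else (toC (Num.sqrt 2))^-1 *: (muP r k - muM r k).

Definition Psimax (r : 'I_d) : 'cV[C]_(d * (d * d)) :=
  (toC (Num.sqrt dR))^-1 *: \sum_(k < d) tensv (ket k) (mu_r r k).

End Defs.

(* Main.v *)
Require Import Defs.
From HB Require Import structures.
From mathcomp Require Import all_boot all_order all_algebra.
From mathcomp Require Import sesquilinear spectral.
From mathcomp Require Import complex mxtens.
From mathcomp Require Import ring lra.
Import Order.TTheory GRing.Theory Num.Theory.
Local Open Scope ring_scope.
Set Implicit Arguments. Unset Strict Implicit. Unset Printing Implicit Defensive.
Section Generic.
Variable C : numClosedFieldType.

Lemma sum_delta_l (I : finType) (c : I) (F : I -> C) :
  \sum_(l : I) (l == c)%:R * F l = F c.
Proof.
rewrite (bigD1 c) //= eqxx mul1r big1 ?addr0 // => l /negPf ->; by rewrite mul0r.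
Qed.

Lemma sum_delta_r (I : finType) (c : I) (F : I -> C) :
  \sum_(l : I) F l * (l == c)%:R = F c.
Proof. by rewrite -[RHS](sum_delta_l c); apply: eq_bigr => l _; rewrite mulrC. Qed.

Lemma sum_pair m n (F : 'I_(m * n) -> C) :
  \sum_(k < m * n) F k = \sum_(a < m) \sum_(b < n) F (mxtens_index (a, b)).
Proof.
rewrite pair_big /=.
rewrite (reindex (@mxtens_index m n)) /=; last first.
  by exists (@mxtens_unindex m n) => k _; rewrite (mxtens_indexK, mxtens_unindexK).
by apply: eq_bigr => -[a b].
Qed.

Lemma cs_fin (I : finType) (a b : I -> C) :
  `|\sum_t a t * b t| ^+ 2 <= (\sum_t `|a t| ^+ 2) * (\sum_t `|b t| ^+ 2).
Proof.
pose u := \row_(k < #|I|) a (enum_val k).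
pose v := \row_(k < #|I|) (b (enum_val k))^*.
have re (F : I -> C) : \sum_t F t = \sum_(k < #|I|) F (enum_val k).
  rewrite (reindex (@enum_val I predT)) //=.
  by exists (@enum_rank I) => k _; rewrite (enum_valK, enum_rankK).
have := (CauchySchwarz (@dotmx C #|I|) u v).1.
rewrite /dotmx /form_of_matrix /= !dotmxE !mxE.
have -> : \sum_(j < #|I|) u 0 j * (v ^t*)%sesqui j 0 = \sum_t a t * b t.
  by rewrite re; apply: eq_bigr => k _; rewrite !mxE conjCK.
have -> : \sum_(j < #|I|) u 0 j * (u ^t*)%sesqui j 0 = \sum_t `|a t| ^+ 2.
  by rewrite re; apply: eq_bigr => k _; rewrite !mxE normCK.
have -> : \sum_(j < #|I|) v 0 j * (v ^t*)%sesqui j 0 = \sum_t `|b t| ^+ 2.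
  by rewrite re; apply: eq_bigr => k _; rewrite !mxE conjCK normCK mulrC.
by [].
Qed.

End Generic.
Section Core.
Variable C : numClosedFieldType.
Variable d : nat.
Local Notation ix a b := (@mxtens_index d d (a, b)).

Lemma ix_eq (a b c e : 'I_d) : (ix a b == ix c e) = (a == c) && (b == e).
Proof. by rewrite (can_eq (@mxtens_indexK d d)) xpair_eqE. Qed.

Lemma P2 (G : 'I_d -> 'I_d -> C) :
  \sum_i \sum_j G i j = \sum_(t : 'I_d * 'I_d) G t.1 t.2.
Proof. by rewrite pair_big. Qed.

Lemma sum4 (F : 'I_d -> 'I_d -> 'I_d -> 'I_d -> C) :
  \sum_i \sum_j \sum_c \sum_e F i j c e =
  \sum_(t : ('I_d * 'I_d) * ('I_d * 'I_d)) F t.1.1 t.1.2 t.2.1 t.2.2.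
Proof.
under eq_bigr => i _ do under eq_bigr => j _ do rewrite P2.
by rewrite P2 pair_big.
Qed.

Lemma exch4 (F : 'I_d -> 'I_d -> 'I_d -> 'I_d -> C) :
  \sum_i \sum_j \sum_c \sum_e F i j c e = \sum_c \sum_e \sum_i \sum_j F i j c e.
Proof.
under eq_bigr => i _ do under eq_bigr => j _ do rewrite P2.
under [RHS]eq_bigr => c _ do under eq_bigr => e _ do rewrite P2.
rewrite P2 [RHS]P2 /=. exact: exchange_big.
Qed.

Lemma dd (b : bool) : (b%:R : C) * b%:R = b%:R.
Proof. by case: b; rewrite ?mulr1 ?mulr0. Qed.

Definition zz (N : 'M[C]_(d * d)) (p q : C) (i r : 'I_d) :=
  p * \sum_j N (ix i j) (ix r j) + q * \sum_j N (ix i j) (ix j r).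

Lemma core (N : 'M[C]_(d * d)) (p q : C) :
  (forall l l', \sum_k (N k l)^* * N k l' = (l == l')%:R) ->
  0 <= p + q -> 0 <= p - q ->
  \sum_i \sum_r `|zz N p q i r| ^+ 2 <= d%:R * (d%:R * p + q) ^+ 2.
Proof.
move=> colON hpq hpmq.
have colON2 l l' : \sum_i \sum_j (N (ix i j) l)^* * N (ix i j) l' = (l == l')%:R.
  by rewrite -(sum_pair (fun k => (N k l)^* * N k l')) colON.
set s1 := sqrtC (p + q); set s2 := sqrtC (p - q).
have s1sq : s1 ^+ 2 = p + q by rewrite sqrtCK.
have s2sq : s2 ^+ 2 = p - q by rewrite sqrtCK.
have s1R : s1 \is Num.real by rewrite ger0_real // sqrtC_ge0.
have s2R : s2 \is Num.real by rewrite ger0_real // sqrtC_ge0.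
set al := (s1 + s2) / 2; set be := (s1 - s2) / 2.
have alR : al \is Num.real by rewrite realM ?realD ?realV // realn.
have beR : be \is Num.real by rewrite realM ?realB ?realV // realn.
have cal : al^* = al by rewrite conj_Creal.
have cbe : be^* = be by rewrite conj_Creal.
have pE : al ^+ 2 + be ^+ 2 = p.
  have -> : al ^+ 2 + be ^+ 2 = (s1 ^+ 2 + s2 ^+ 2) / 2 by rewrite /al /be; field.
  by rewrite s1sq s2sq; field.
have qE : 2 * al * be = q.
  have -> : 2 * al * be = (s1 ^+ 2 - s2 ^+ 2) / 2 by rewrite /al /be; field.
  by rewrite s1sq s2sq; field.
clearbody al be.
pose z := zz N p q.
pose M i j c e := al * N (ix i j) (ix c e) + be * N (ix i j) (ix e c).
have F1 i r : z i r = \sum_j (al * M i j r j + be * M i j j r).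
  rewrite /z /zz -pE -qE !mulr_sumr -big_split; apply: eq_bigr => j _.
  rewrite /M /=; ring.
have -> : \sum_i \sum_r `|zz N p q i r| ^+ 2 = \sum_i \sum_r `|z i r| ^+ 2 by [].
clearbody z.
pose w i j c e := al * (e == j)%:R * (z i c)^* + be * (c == j)%:R * (z i e)^*.
pose S := \sum_i \sum_r `|z i r| ^+ 2.
have F2 : S = \sum_i \sum_j \sum_c \sum_e M i j c e * w i j c e.
  apply: eq_bigr => i _.
  have inner j c : \sum_e M i j c e * w i j c e =
      al * M i j c j * (z i c)^* + (c == j)%:R * \sum_e be * M i j c e * (z i e)^*.
    rewrite mulr_sumr.
    have -> : \sum_e M i j c e * w i j c e =
        \sum_e ((e == j)%:R * (al * M i j c e * (z i c)^*) +
                (c == j)%:R * (be * M i j c e * (z i e)^*)).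
      by apply: eq_bigr => e _; rewrite /w; ring.
    by rewrite big_split /= sum_delta_l.
  under [RHS]eq_bigr => j _ do under eq_bigr => c _ do rewrite inner.
  under [RHS]eq_bigr => j _ do rewrite big_split /= sum_delta_l.
  rewrite [RHS]big_split /= [X in _ = X + _]exchange_big [X in _ = _ + X]exchange_big /=.
  rewrite -big_split /=.
  apply: eq_bigr => c _; rewrite F1 normCK mulr_suml -big_split /=.
  by apply: eq_bigr => j _; ring.
have S0 : 0 <= S by apply: sumr_ge0 => i _; apply: sumr_ge0 => r _; exact: exprn_ge0.
have F3 : \sum_i \sum_j \sum_c \sum_e `|M i j c e| ^+ 2 = d%:R * (d%:R * p + q).
  rewrite exch4.
  have e1 c e : \sum_i \sum_j `|M i j c e| ^+ 2 = p + q * (c == e)%:R.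
    have -> : \sum_i \sum_j `|M i j c e| ^+ 2 =
      \sum_i \sum_j (al ^+ 2 * ((N (ix i j) (ix c e))^* * N (ix i j) (ix c e)) +
                     be ^+ 2 * ((N (ix i j) (ix e c))^* * N (ix i j) (ix e c)) +
                     al * be * ((N (ix i j) (ix e c))^* * N (ix i j) (ix c e)) +
                     al * be * ((N (ix i j) (ix c e))^* * N (ix i j) (ix e c))).
      apply: eq_bigr => i _; apply: eq_bigr => j _.
      by rewrite normCK /M /= rmorphD !rmorphM /= cal cbe; ring.
    under eq_bigr => i _ do rewrite !big_split /= -!mulr_sumr.
    rewrite !big_split /= -!mulr_sumr !colON2 !ix_eq !eqxx /=.
    rewrite -pE -qE; have [ce|ne] := eqVneq c e; first (subst e; rewrite /= ?eqxx /=; ring).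
    by rewrite /=; ring.
  under eq_bigr => c _ do under eq_bigr => e _ do rewrite e1.
  under eq_bigr => c _ do rewrite big_split /= sumr_const card_ord.
  have h c : \sum_e q * (c == e)%:R = q.
    by rewrite (eq_bigr (fun e => (e == c)%:R * q)) ?sum_delta_l // => e _; rewrite eq_sym mulrC.
  under eq_bigr => c _ do rewrite h.
  rewrite sumr_const card_ord; ring.
have F4 : \sum_i \sum_j \sum_c \sum_e `|w i j c e| ^+ 2 = (d%:R * p + q) * S.
  rewrite /S mulr_sumr; apply: eq_bigr => i _.
  have e1 j : \sum_c \sum_e `|w i j c e| ^+ 2 =
      p * \sum_c `|z i c| ^+ 2 + q * `|z i j| ^+ 2.
    have -> : \sum_c \sum_e `|w i j c e| ^+ 2 =
      \sum_c \sum_e ((e == j)%:R * (al ^+ 2 * `|z i c| ^+ 2) +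
                     (c == j)%:R * (be ^+ 2 * `|z i e| ^+ 2) +
                     (e == j)%:R * ((c == j)%:R * (al * be * ((z i c)^* * z i e + (z i e)^* * z i c)))).
      apply: eq_bigr => c _; apply: eq_bigr => e _.
      rewrite !normCK /w /= rmorphD !rmorphM /= cal cbe !conjCK !rmorph_nat.
      case: (e == j); case: (c == j); rewrite /= ?mulr1n ?mulr0n; ring.
    under eq_bigr => c _ do rewrite !big_split /= sum_delta_l -mulr_sumr sum_delta_l.
    rewrite !big_split /= sum_delta_l -!mulr_sumr.
    rewrite sum_delta_l -pE -qE (normCK (z i j)); ring.
  under eq_bigr => j _ do rewrite e1.
  rewrite big_split /= sumr_const card_ord -mulr_sumr; ring.
have CS := cs_fin (fun t : ('I_d * 'I_d) * ('I_d * 'I_d) => M t.1.1 t.1.2 t.2.1 t.2.2)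
                  (fun t => w t.1.1 t.1.2 t.2.1 t.2.2).
rewrite /= -(sum4 (fun i j c e => M i j c e * w i j c e))
  -(sum4 (fun i j c e => `|M i j c e| ^+ 2)) -(sum4 (fun i j c e => `|w i j c e| ^+ 2)) in CS.
rewrite -F2 F3 F4 ger0_norm // in CS.
have pR : p \is Num.real.
  have -> : p = ((p + q) + (p - q)) / 2 by field.
  by apply: realM; [apply: realD; exact: ger0_real | rewrite realV realn].
have qR : q \is Num.real.
  have -> : q = ((p + q) - (p - q)) / 2 by field.
  by apply: realM; [apply: realB; exact: ger0_real | rewrite realV realn].
have KR : d%:R * p + q \is Num.real by rewrite realD // realM // realn.
have K2 : 0 <= (d%:R * p + q) ^+ 2 by apply: real_exprn_even_ge0.
rewrite -/S.
have [->|Sn0] := eqVneq S 0; first by rewrite mulr_ge0 // ler0n.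
have Spos : 0 < S by rewrite lt_def Sn0 S0.
have E : d%:R * (d%:R * p + q) * ((d%:R * p + q) * S) = (d%:R * (d%:R * p + q) ^+ 2) * S by ring.
by rewrite E expr2 ler_pM2r in CS.
Qed.

End Core.
Section RealId.
Variable R : rcfType.

Lemma ca_id (d : nat) (x : R) : (2 <= d)%N -> -1 <= x <= 1 ->
  cos_alpha d x = sin_alpha d x / Num.sqrt (dR R d - 1) * cos_theta d x * Num.sqrt 2.
Proof.
move=> d2 /andP[x1 x2].
rewrite /cos_alpha /sin_alpha /cos_theta /lam_plus /lam_minus.
have D2 : 2 <= dR R d by rewrite /dR (ler_nat R 2 d).
set D := dR R d.
have D0 : 0 < D by lra.
have D1 : 0 < D - 1 by lra.
have Dp : 0 < D + 1 by lra.
set lp := (1 + x) / (D * (D + 1)).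
set lm := (1 - x) / (D * (D - 1)).
have lp0 : 0 <= lp by rewrite /lp divr_ge0 ?mulr_ge0 //; lra.
have lm0 : 0 <= lm by rewrite /lm divr_ge0 ?mulr_ge0 //; lra.
have a1E : 1 - D * lp = (D - x) / (D + 1).
  rewrite /lp; field; apply/andP; split; rewrite ?lt0r_neq0 //; lra.
have a1 : 0 <= 1 - D * lp by rewrite a1E divr_ge0 //; lra.
have slE : lp + lm = 2 * (D - x) / (D * (D + 1) * (D - 1)).
  rewrite /lp /lm; field.
  by rewrite !lt0r_neq0 //.
have sl : 0 < lp + lm by rewrite slE divr_gt0 ?mulr_gt0 //; lra.
have c0 : 0 <= lp / (lp + lm) by rewrite divr_ge0 // ltW.
have ab0 : 0 <= (1 - D * lp) * (D - 1)^-1 by rewrite mulr_ge0 // invr_ge0 ltW.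
have abc0 : 0 <= (1 - D * lp) * (D - 1)^-1 * (lp / (lp + lm)) by rewrite mulr_ge0.
rewrite -(sqrtrV (ltW D1)) -(sqrtrM _ a1) -(sqrtrM _ ab0) -(sqrtrM _ abc0).
apply: congr1.
rewrite /lp /lm; field.
by rewrite !lt0r_neq0 //; lra.
Qed.

End RealId.
Section Main.
Variable R : rcfType.
Local Notation C := R[i].
Variable d : nat.
Local Notation n := (d * d)%N.
Local Notation D := (d * (d * d))%N.
Local Notation ix a b := (@mxtens_index d d (a, b)).
Local Notation ix3 a m := (@mxtens_index d (d * d) (a, m)).

Lemma toCE (a : R) : toC a = (a%:C)%C. Proof. by []. Qed.
Lemma toCM (a b : R) : toC (a * b) = toC a * toC b. Proof. by rewrite !toCE rmorphM. Qed.
Lemma toCD (a b : R) : toC (a + b) = toC a + toC b. Proof. by rewrite !toCE rmorphD. Qed.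
Lemma toCB (a b : R) : toC (a - b) = toC a - toC b. Proof. by rewrite !toCE rmorphB. Qed.
Lemma toCV (a : R) : toC (a^-1) = (toC a)^-1. Proof. by rewrite !toCE fmorphV. Qed.
Lemma toCn k : toC (k%:R : R) = k%:R. Proof. by rewrite toCE rmorph_nat. Qed.
Lemma toC_ge0 (a : R) : 0 <= a -> 0 <= toC a. Proof. by rewrite toCE ler0c. Qed.
Lemma toC_gt0 (a : R) : 0 < a -> 0 < toC a. Proof. by rewrite toCE ltcR. Qed.
Lemma conj_toC (a : R) : (toC a)^* = toC a.
Proof.
apply: conj_Creal; have [/toC_ge0/ger0_real//|/ltW] := leP 0 a.
rewrite -oppr_ge0 => /toC_ge0; rewrite toCE rmorphN => /ger0_real.
by rewrite realN.
Qed.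

Lemma adjE m k (M : 'M[C]_(m, k)) : adj M = (M ^t*)%sesqui.
Proof. by rewrite /adj map_trmx. Qed.
Lemma adj_mul m k l (A : 'M[C]_(m, k)) (B : 'M[C]_(k, l)) : adj (A *m B) = adj B *m adj A.
Proof. by rewrite /adj map_mxM trmx_mul. Qed.
Lemma adjK m k (A : 'M[C]_(m, k)) : adj (adj A) = A.
Proof. by apply/matrixP => i j; rewrite !mxE conjCK. Qed.
Lemma adj_tens m k l o (A : 'M[C]_(m, k)) (B : 'M[C]_(l, o)) : adj (A *t B) = adj A *t adj B.
Proof. by rewrite /adj map_mxT trmx_tens. Qed.
Lemma adj1 m : adj (1%:M : 'M[C]_m) = 1%:M.
Proof. by apply/matrixP => i j; rewrite !mxE eq_sym rmorph_nat. Qed.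
Lemma adjE00 (A : 'M[C]_1) : adj A 0 0 = (A 0 0)^*.
Proof. by rewrite !mxE. Qed.

Lemma ketE k (i j : 'I_k) (o : 'I_1) : ket R i j o = (j == i)%:R.
Proof. by rewrite /ket mxE (ord1 o) andbT. Qed.

Lemma tensvE m k (u : 'cV[C]_m) (v : 'cV[C]_k) a b :
  tensv u v (mxtens_index (a, b)) 0 = u a 0 * v b 0.
Proof. by rewrite /tensv !mxE mxtens_indexK /= !ord1. Qed.


Lemma sum_delta_cond (I : finType) (P : pred I) (c : I) (F : I -> C) :
  \sum_(l | P l) (c == l)%:R * F l = if P c then F c else 0.
Proof.
rewrite big_mkcond /= (bigD1 c) //= eqxx mul1r big1 ?addr0.
  by case: (P c); rewrite ?mul1r.
by move=> l /negPf; rewrite eq_sym => ->; case: (P l); rewrite ?mul0r.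
Qed.

Lemma dpair (a b c e : 'I_d) :
  \sum_u \sum_v (((u == a) && (v == b))%:R * ((u == c) && (v == e))%:R : C) =
  ((a == c) && (b == e))%:R.
Proof.
transitivity (\sum_(k < n) ((k == ix a b)%:R * (k == ix c e)%:R : C)).
  by rewrite sum_pair; apply: eq_bigr => u _; apply: eq_bigr => v _; rewrite !ix_eq.
by rewrite sum_delta_l ix_eq.
Qed.

Definition hh : C := (toC (Num.sqrt 2))^-1.
Definition c1 (a b : 'I_d) : C := if b == a then 1 else hh.
Definition c2 (a b : 'I_d) : C := if b == a then 0 else if (b < a)%N then hh else - hh.

Lemma hh_neq0 : hh != 0.
Proof. by rewrite invr_eq0 lt0r_neq0 // toC_gt0 // sqrtr_gt0 ltr0n. Qed.
Lemma hh2 : hh * hh = 2^-1.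
Proof.
rewrite /hh -invfM -toCM -expr2 sqr_sqrtr ?ler0n //.
by rewrite toCn.
Qed.
Lemma hh_conj : hh^* = hh.
Proof. by rewrite /hh -toCV conj_toC. Qed.
Lemma c1_conj a b : (c1 a b)^* = c1 a b.
Proof. by rewrite /c1; case: ifP; rewrite ?rmorph1 ?hh_conj. Qed.
Lemma c2_conj a b : (c2 a b)^* = c2 a b.
Proof.
rewrite /c2; case: ifP => _; first by rewrite rmorph0.
case: ifP => _; apply: conj_Creal; rewrite ?realN; apply: ger0_real;
  by rewrite invr_ge0 toC_ge0 // sqrtr_ge0.
Qed.

Lemma muE (a b u v : 'I_d) : mu_r R a b (ix u v) 0 =
  c1 a b * ((u == a) && (v == b))%:R + c2 a b * ((u == b) && (v == a))%:R.
Proof.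
rewrite /mu_r /c1 /c2 /muP /muM.
have [->|nba] := eqVneq b a.
  by rewrite ketE ix_eq mul1r mul0r addr0.
case: ifP => _; rewrite !mxE ?eqxx ?andbT !ix_eq /hh; ring.
Qed.


Lemma hh2' : hh * hh * 2 = 1.
Proof. by rewrite hh2 mulVf // pnatr_eq0. Qed.

Lemma ccase (a b a' b' : 'I_d) :
  c1 a b * c1 a' b' * ((a == a') && (b == b'))%:R +
  c1 a b * c2 a' b' * ((a == b') && (b == a'))%:R +
  c2 a b * c1 a' b' * ((b == a') && (a == b'))%:R +
  c2 a b * c2 a' b' * ((b == b') && (a == a'))%:R = ((a == a') && (b == b'))%:R.
Proof.
have h2 := hh2'.
have [eA|nA] := eqVneq (a', b') (a, b).
  case: eA => -> ->; rewrite !eqxx /= /c1 /c2.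
  have [_|nba] := eqVneq b a; first by rewrite /=; ring.
  rewrite /=; case: ifP => _; ring: h2.
have [eB|nB] := eqVneq (a', b') (b, a).
  case: eB => e1 e2; subst a' b'.
  have nab : a != b by move: nA; rewrite xpair_eqE negb_and => /orP[] //; rewrite eq_sym.
  rewrite !eqxx (negPf nab) eq_sym (negPf nab) /= /c1 /c2 (negPf nab) eq_sym (negPf nab).
  case: (ltngtP a b) => [lt|gt|eq]; last by move: nab; rewrite -(inj_eq val_inj) /= eq eqxx.
    ring.
  ring.
move: nA nB; rewrite !xpair_eqE !negb_and => nA nB.
have -> : (a == a') && (b == b') = false.
  by apply/negbTE/negP => /andP[/eqP e1 /eqP e2]; move: nA; rewrite e1 e2 !eqxx.
have -> : (a == b') && (b == a') = false.
  by apply/negbTE/negP => /andP[/eqP e1 /eqP e2]; move: nB; rewrite e1 e2 !eqxx.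
have -> : (b == a') && (a == b') = false.
  by apply/negbTE/negP => /andP[/eqP e1 /eqP e2]; move: nB; rewrite e1 e2 !eqxx.
have -> : (b == b') && (a == a') = false.
  by apply/negbTE/negP => /andP[/eqP e1 /eqP e2]; move: nA; rewrite e1 e2 !eqxx.
by rewrite /=; ring.
Qed.


Definition Umx : 'M[C]_n :=
  locked (\matrix_(k, l) mu_r R (mxtens_unindex l).1 (mxtens_unindex l).2 k 0).

Lemma UE k (a b : 'I_d) : Umx k (ix a b) = mu_r R a b k 0.
Proof. by rewrite /Umx -lock mxE mxtens_indexK. Qed.

Lemma Uorth (a b a' b' : 'I_d) :
  \sum_k (Umx k (ix a b))^* * Umx k (ix a' b') = ((a == a') && (b == b'))%:R.
Proof.
rewrite sum_pair.
pose dl (u v a b : 'I_d) : C := ((u == a) && (v == b))%:R.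
transitivity (\sum_u \sum_v (c1 a b * c1 a' b' * (dl u v a b * dl u v a' b') +
   c1 a b * c2 a' b' * (dl u v a b * dl u v b' a') +
   c2 a b * c1 a' b' * (dl u v b a * dl u v a' b') +
   c2 a b * c2 a' b' * (dl u v b a * dl u v b' a'))).
  apply: eq_bigr => u _; apply: eq_bigr => v _.
  rewrite !UE !muE rmorphD !rmorphM /= c1_conj c2_conj !rmorph_nat /dl; ring.
under eq_bigr => u _ do rewrite !big_split /= -!mulr_sumr.
by rewrite !big_split /= -!mulr_sumr /dl !dpair ccase.
Qed.

Lemma UtU : ((Umx ^t*)%sesqui *m Umx) = 1%:M.
Proof.
apply/matrixP => l l'; rewrite mxE [RHS]mxE.
case: (mxtens_indexP l) => a b; case: (mxtens_indexP l') => a' b'.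
rewrite ix_eq -Uorth; apply: eq_bigr => k _; by rewrite !mxE.
Qed.

Lemma Uadj_unitary : adj Umx \is unitarymx.
Proof. by rewrite adjE; apply/unitarymxP; rewrite trmxCK UtU. Qed.


Lemma addE m k (A B : 'M[C]_(m, k)) i j : (A + B) i j = A i j + B i j.
Proof. exact: mxE. Qed.
Lemma subE m k (A B : 'M[C]_(m, k)) i j : (A - B) i j = A i j - B i j.
Proof. by rewrite !mxE. Qed.
Lemma scaleE m k (c : C) (A : 'M[C]_(m, k)) i j : (c *: A) i j = c * A i j.
Proof. exact: mxE. Qed.
Lemma oneE m (i j : 'I_m) : (1%:M : 'M[C]_m) i j = (i == j)%:R.
Proof. exact: mxE. Qed.

Variable x : R.

Definition Ac : C := toC (sin_alpha d x / Num.sqrt (dR R d - 1)).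
Definition Pc : C := Ac * toC (cos_theta d x).
Definition Qc : C := Ac * toC (sin_theta d x).
Definition pp : C := (Pc + Qc) / (2 * hh).
Definition qq : C := (Pc - Qc) / (2 * hh).

Definition Phi (r : 'I_d) : 'cV[C]_D :=
  \sum_(j < d) tensv (ket R j) (pp *: ket R (ix r j) + qq *: ket R (ix j r)).

Lemma PhiE r b l : Phi r (ix3 b l) 0 = pp * (l == ix r b)%:R + qq * (l == ix b r)%:R.
Proof.
rewrite /Phi summxE.
under eq_bigr => j _ do rewrite tensvE ketE addE !scaleE !ketE.
by rewrite (eq_bigr (fun j => (j == b)%:R * (pp * (l == ix r j)%:R + qq * (l == ix j r)%:R)))
  ?sum_delta_l // => j _; rewrite eq_sym.
Qed.

Lemma XE (N : 'M[C]_n) r a m :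
  ((1%:M *t N) *m Phi r) (ix3 a m) 0 = pp * N m (ix r a) + qq * N m (ix a r).
Proof.
rewrite mxE sum_pair.
transitivity (\sum_b (b == a)%:R *
   \sum_l (pp * (N m l * (l == ix r b)%:R) + qq * (N m l * (l == ix b r)%:R))).
  apply: eq_bigr => b _; rewrite mulr_sumr; apply: eq_bigr => l _.
  rewrite tensmxE oneE PhiE eq_sym; ring.
by rewrite sum_delta_l big_split /= -!mulr_sumr !sum_delta_r.
Qed.

Lemma PsiE (hca : toC (cos_alpha d x) = pp + qq) r :
  Psi x r = (1%:M *t Umx) *m Phi r.
Proof.
apply/matrixP => k o; rewrite (ord1 o).
case: (mxtens_indexP k) => a m; case: (mxtens_indexP m) => u v.
rewrite XE !UE !muE /Psi !addE !scaleE !summxE tensvE ketE /muP ketE ix_eq.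
under eq_bigr => j _ do rewrite tensvE ketE addE !scaleE /muP /muM !ketE !ix_eq.
under [X in _ + _ * X = _]eq_bigr => j _ do rewrite tensvE ketE subE !scaleE /muP /muM !ketE !ix_eq.
rewrite !sum_delta_cond -/Ac.
have hh0 := hh_neq0.
rewrite /c1 /c2.
have [ear|nar] := eqVneq a r.
  subst a; rewrite ltnn /= ?eqxx hca; ring.
rewrite /=.
case: (ltngtP a r) => [lt|gt|eq]; last by move: nar; rewrite -(inj_eq val_inj) /= eq eqxx.
  rewrite /pp /qq /Pc /Qc; field => //.
rewrite /pp /qq /Pc /Qc; field => //.
Qed.


Definition hd : C := (toC (Num.sqrt (dR R d)))^-1.

Lemma adjEnt m k (M : 'M[C]_(m, k)) i j : adj M i j = (M j i)^*.
Proof. by rewrite /adj !mxE. Qed.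

Lemma psi_refE i a m : psi_ref R i (ix3 a m) 0 = hd * (m == ix i a)%:R.
Proof.
rewrite /psi_ref scaleE summxE /hd.
have -> : \sum_k tensv (ket R k) (ket R (ix i k)) (ix3 a m) 0 = (m == ix i a)%:R :> C.
  under eq_bigr => j _ do rewrite tensvE !ketE.
  by rewrite (eq_bigr (fun j => (j == a)%:R * (m == ix i j)%:R)) ?sum_delta_l // => j _;
    rewrite eq_sym.
by [].
Qed.

Lemma PsimaxE i : (1%:M *t Umx) *m psi_ref R i = Psimax R i.
Proof.
apply/matrixP => k o; rewrite (ord1 o).
case: (mxtens_indexP k) => a m.
rewrite mxE sum_pair /Psimax scaleE summxE -/hd.
transitivity (\sum_b (b == a)%:R * (hd * \sum_l (Umx m l * (l == ix i b)%:R))).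
  apply: eq_bigr => b _; rewrite !mulr_sumr; apply: eq_bigr => l _.
  rewrite tensmxE oneE psi_refE eq_sym; ring.
rewrite sum_delta_l sum_delta_r UE; congr (_ * _).
under eq_bigr => j _ do rewrite tensvE ketE.
by rewrite (eq_bigr (fun j => (j == a)%:R * mu_r R i j m 0)) ?sum_delta_l // => j _;
  rewrite eq_sym.
Qed.

Lemma yE (N : 'M[C]_n) i r :
  (adj (psi_ref R i) *m (1%:M *t N) *m Phi r) 0 0 = hd^* * zz N pp qq i r.
Proof.
rewrite -mulmxA mxE sum_pair.
transitivity (\sum_a (hd^* * (pp * N (ix i a) (ix r a) + qq * N (ix i a) (ix a r)))).
  apply: eq_bigr => a _.
  rewrite (eq_bigr (fun m => (m == ix i a)%:R * (hd^* * (pp * N m (ix r a) + qq * N m (ix a r)))))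
    ?sum_delta_l // => m _.
  rewrite adjEnt psi_refE XE rmorphM /= rmorph_nat; ring.
rewrite /zz -mulr_sumr; congr (_ * _).
by rewrite big_split /= -!mulr_sumr.
Qed.

Lemma quad (b : 'cV[C]_D) (c : C) (Ps : 'I_d -> 'cV[C]_D) :
  (adj b *m (c *: \sum_r Ps r *m adj (Ps r)) *m b) 0 0 =
  c * \sum_r `|(adj b *m Ps r) 0 0| ^+ 2.
Proof.
rewrite -scalemxAr -scalemxAl scaleE mulmx_sumr mulmx_suml summxE; congr (_ * _).
apply: eq_bigr => r _.
rewrite !mulmxA -(mulmxA _ _ b) -[X in _ *m X]adjK adj_mul adjK.
by rewrite mxE big_ord1 adjEnt normCK.
Qed.

Lemma fef_rearr (T : 'M[C]_D) (rho : 'M[C]_D) (a : 'cV[C]_D) :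
  adj a *m (T *m rho *m adj T) *m a = adj (adj T *m a) *m rho *m (adj T *m a).
Proof. by rewrite adj_mul adjK !mulmxA. Qed.

Lemma fefE (hca : toC (cos_alpha d x) = pp + qq) (V : 'M[C]_n) :
  fef_value (rhoAC d x) V =
  (toC (dR R d))^-1 * `|hd| ^+ 2 * \sum_i \sum_r `|zz (V *m Umx) pp qq i r| ^+ 2.
Proof.
rewrite /fef_value mulr_sumr; apply: eq_bigr => i _.
rewrite fef_rearr /rhoAC quad -mulrA; apply: congr1; rewrite mulr_sumr.
apply: eq_bigr => r _.
rewrite adj_mul adjK (PsiE hca) mulmxA -(mulmxA (adj (psi_ref R i))) tensmx_mul mul1mx yE.
by rewrite normrM norm_conjC exprMn.
Qed.


Lemma colON_of (N : 'M[C]_n) : N \is unitarymx ->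
  forall l l', \sum_k (N k l)^* * N k l' = (l == l')%:R.
Proof.
rewrite -trmxC_unitary => /unitarymxP; rewrite trmxCK => E l l'.
have := congr1 (fun M : 'M[C]_n => M l l') E; rewrite /= mxE [in RHS]mxE => <-.
by apply: eq_bigr => k _; rewrite !mxE.
Qed.

Lemma zz1 (i r : 'I_d) : zz 1%:M pp qq i r = (i == r)%:R * (d%:R * pp + qq).
Proof.
rewrite /zz.
under eq_bigr => j _ do rewrite oneE ix_eq eqxx andbT.
under [X in _ + _ * X]eq_bigr => j _ do rewrite oneE ix_eq -mulnb natrM [i == _]eq_sym.
rewrite sumr_const card_ord sum_delta_l.
rewrite -mulr_natl; ring.
Qed.

End Main.

Lemma main_lemma (R : rcfType) (d : nat) (x : R) :
  (2 <= d)%N -> -1 <= x <= 1 ->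
  is_FEF (rhoAC d x)
    (\sum_(r < d) (adj (Psimax R r) *m rhoAC d x *m Psimax R r) 0 0).
Proof.
move=> d2 hx.
have hh0 := hh_neq0 R.
have hhpos : 0 <= hh R by rewrite /hh invr_ge0 toC_ge0 // sqrtr_ge0.
have Ac0 : 0 <= Ac d x by rewrite /Ac toC_ge0 // divr_ge0 // sqrtr_ge0.
have hca : toC (cos_alpha d x) = pp d x + qq d x.
  rewrite (ca_id d2 hx) toCM toCM -/(Ac d x).
  have -> : pp d x + qq d x = Pc d x / hh R by rewrite /pp /qq; field.
  by rewrite /Pc /hh invrK.
have pq0 : 0 <= pp d x + qq d x.
  have -> : pp d x + qq d x = Pc d x / hh R by rewrite /pp /qq; field.
  by rewrite divr_ge0 // /Pc mulr_ge0 // toC_ge0 // sqrtr_ge0.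
have pmq0 : 0 <= pp d x - qq d x.
  have -> : pp d x - qq d x = Qc d x / hh R by rewrite /pp /qq; field.
  by rewrite divr_ge0 // /Qc mulr_ge0 // toC_ge0 // sqrtr_ge0.
have ef : \sum_(r < d) (adj (Psimax R r) *m rhoAC d x *m Psimax R r) 0 0 =
          fef_value (rhoAC d x) (adj (Umx R d)).
  rewrite /fef_value; apply: eq_bigr => i _.
  by rewrite fef_rearr adj_tens adj1 adjK PsimaxE.
have K0 : 0 <= (toC (dR R d))^-1 * `|hd R d| ^+ 2.
  by rewrite mulr_ge0 ?exprn_ge0 // invr_ge0 toC_ge0 // ler0n.
have KK0 : 0 <= d%:R * pp d x + qq d x.
  have -> : d%:R * pp d x + qq d x =
    (d%:R - 1) * ((pp d x + qq d x) / 2 + (pp d x - qq d x) / 2) + (pp d x + qq d x) by field.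
  have D1 : 0 <= (d%:R : R[i]) - 1 by rewrite subr_ge0 (ler_nat _ 1 d) ltnW.
  by rewrite addr_ge0 // mulr_ge0 // addr_ge0 // divr_ge0.
have S1 : \sum_i \sum_r `|zz (adj (Umx R d) *m Umx R d) (pp d x) (qq d x) i r| ^+ 2 =
          d%:R * (d%:R * pp d x + qq d x) ^+ 2.
  rewrite adjE UtU.
  transitivity (\sum_(i < d) \sum_(r < d) (r == i)%:R * (d%:R * pp d x + qq d x) ^+ 2).
    apply: eq_bigr => i _; apply: eq_bigr => r _.
    rewrite zz1 normrM exprMn ger0_norm //.
    by case: (eqVneq i r) => _; rewrite /= ?mulr1n ?mulr0n ?expr1n ?expr0n ?mul1r ?mul0r ?ger0_norm.
  under eq_bigr => i _ do rewrite sum_delta_l.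
  by rewrite sumr_const card_ord [RHS]mulr_natl.
split.
  exists (adj (Umx R d)); split; first exact: Uadj_unitary.
  by rewrite ef.
move=> V HV.
rewrite ef !(fefE hca) S1.
apply: ler_wpM2l => //.
apply: core => //.
apply: colON_of; apply: mul_unitarymx => //.
by have := Uadj_unitary R d; rewrite adjE trmxC_unitary.
Qed.

Unset Implicit Arguments.

Theorem lemma1 (R : rcfType) (d : nat) (x : R) :
  (2 <= d)%N -> -1 <= x <= 1 ->
  is_FEF (rhoAC d x)
    (\sum_(r < d) (adj (Psimax R r) *m rhoAC d x *m Psimax R r) 0 0).
Proof. exact: main_lemma. Qed.
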